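(* Let $x,y\in\mathbb{R}[X]$ be nonzero polynomials with $\deg x=\deg y$. (a) If either $y(u)>0$ for every real root $u$ of $x$, or $y(u)<0$ for every real root $u$ of $x$, then there exists $\beta\in\Gamma$ such that $\delta=x^2+y\beta\in\Gamma^+$ and $\deg x-1\le\deg\beta\le\deg x=\deg\delta/2$. (b) If either $x(z)>0$ for every real root $z$ of $y$, or $x(z)<0$ for every real root $z$ of $y$, then there exists $\eta\in\Gamma$ such that $\delta=x\eta+y^2\in\Gamma^+$ and $\deg y-1\le\deg\eta\le\deg y=\deg\delta/2$.
   Context: $\Gamma$ denotes the set of polynomials in $\mathbb{R}[X]$ having no real root (nonzero constants included), and $\Gamma^+=\{f\in\mathbb{R}[X] : f(r)>0 \text{ for all } r\in\mathbb{R}\}$. *)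

(* Defs.v *)
(* R[X] is rendered as {poly R} for an arbitrary real closed
   field R (the statement is first-order in the coefficients, so by Tarski
   transfer this is equivalent to the case R = the reals). *)
From HB Require Import structures.
From mathcomp Require Import all_boot all_order all_algebra.
Set Implicit Arguments. Unset Strict Implicit. Unset Printing Implicit Defensive.
Import Order.TTheory GRing.Theory Num.Theory.
Local Open Scope ring_scope.

(* degree of a polynomial (meaningful for nonzero p) *)
Definition deg (R : ringType) (p : {poly R}) : nat := (size p).-1.

(* Gamma: polynomials with no real root (nonzero constants included, 0 excluded) *)
Definition Gamma (R : rcfType) (p : {poly R}) : Prop := forall r : R, ~~ root p r.

Definition GammaPos (R : rcfType) (p : {poly R}) : Prop := forall r : R, 0 < p.[r].

(* Main.v *)
Require Import Defs.
From HB Require Import structures.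
From mathcomp Require Import all_boot all_order all_algebra.
From mathcomp Require Import polyrcf.
From mathcomp Require Import ring lra zify.
Import Order.TTheory GRing.Theory Num.Theory.
Local Open Scope ring_scope.
Section S.
Variable R : rcfType.
Implicit Types S T U : {poly R}.

Lemma wronsk0 S T u : S.[u] != 0 ->
  T^`() * S = T * S^`() -> T = (T.[u] / S.[u])%:P * S.
Proof.
move=> Su hW.
set U := T - (T.[u] / S.[u])%:P * S.
have hU : U^`() * S = U * S^`().
  rewrite /U !derivE.
  rewrite !mulrBl hW; ring.
have Uu : U.[u] = 0.
  by rewrite /U !hornerE divfK // subrr.
have [U0|U0] := eqVneq U 0.
  by apply/eqP; rewrite -subr_eq0 -/U U0.
have [m [q qu Ue]] := multiplicity_XsubC U u.
rewrite U0 /= in qu.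
case: m Ue => [|k] Ue.
  by move: Uu; rewrite Ue expr0 mulr1 => /eqP; rewrite -rootE (negPf qu).
move: hU; rewrite Ue derivM deriv_exp derivXsubC mul1r /=.
set Z := ('X - u%:P) => hU2.
have eq1 : ((q^`() * Z + q *+ k.+1) * S - q * Z * S^`()) * Z ^+ k = 0.
  apply: etrans (_ : _ = (q^`() * Z ^+ k.+1 + q * (Z ^+ k *+ k.+1)) * S - q * Z ^+ k.+1 * S^`()) _.
    rewrite !exprS; ring.
  by rewrite hU2 subrr.
move/eqP: eq1; rewrite mulf_eq0 expf_eq0 /Z polyXsubC_eq0 andbF orbF => /eqP eq2.
have := congr1 (fun p => p.[u]) eq2; rewrite /= !hornerE subrr !mulr0 add0r mul0r subr0.
move/eqP; rewrite !mulf_eq0 (negPf Su) orbF hornerMn -mulr_natr mulf_eq0 pnatr_eq0 orbF.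
by rewrite -rootE (negPf qu).
Qed.

Lemma deriv_right (P : {poly R}) (a t : R) : a < t -> P.[a] = 0 ->
  (forall s, a < s -> s < t -> P.[s] < 0) -> P^`().[a] <= 0.
Proof.
move=> hat Pa hneg; rewrite leNgt; apply/negP => hp.
have [d d0 hd] := poly_cont a P^`() hp.
pose m := Num.min d (t - a).
have m0 : 0 < m by rewrite lt_min d0 subr_gt0 hat.
have md : m <= d by rewrite ge_min lexx.
have mt : m <= t - a by rewrite ge_min lexx orbT.
have has : a < a + m / 2 by lra.
have [c hc eq] := poly_mvt P has.
have c1 : a < c by rewrite (itvP hc).
have c2 : c < a + m / 2 by rewrite (itvP hc).
have : `|c - a| < d by rewrite ger0_norm; lra.
move/hd; rewrite ltr_distlC => /andP[_ h1].
have : 0 < P.[a + m / 2].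
  move: eq; rewrite Pa subr0 => ->; apply: mulr_gt0; lra.
have := hneg (a + m / 2) has ltac:(lra); lra.
Qed.

Lemma deriv_left (P : {poly R}) (b t : R) : t < b -> P.[b] = 0 ->
  (forall s, t < s -> s < b -> P.[s] < 0) -> 0 <= P^`().[b].
Proof.
move=> htb Pb hneg; rewrite leNgt; apply/negP => hp.
have hp' : 0 < - P^`().[b] by rewrite oppr_gt0.
have [d d0 hd] := poly_cont b P^`() hp'.
pose m := Num.min d (b - t).
have m0 : 0 < m by rewrite lt_min d0 subr_gt0 htb.
have md : m <= d by rewrite ge_min lexx.
have mt : m <= b - t by rewrite ge_min lexx orbT.
have hsb : b - m / 2 < b by lra.
have [c hc eq] := poly_mvt P hsb.
have c1 : b - m / 2 < c by rewrite (itvP hc).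
have c2 : c < b by rewrite (itvP hc).
have : `|c - b| < d by rewrite ler0_norm; lra.
move/hd; rewrite ltr_distlC => /andP[h1 _].
have : P^`().[c] * (b - (b - m / 2)) < 0.
  rewrite pmulr_llt0; lra.

rewrite -eq Pb.
have := hneg (b - m / 2) ltac:(lra) hsb; lra.
Qed.

Lemma list_bound (s : seq R) (f : R -> R) : exists B, forall c, c \in s -> f c <= B.
Proof.
elim: s => [|a s [B hB]]; first by exists 0.
exists (Num.max (f a) B) => c; rewrite in_cons => /orP[/eqP->|/hB h].
  by rewrite le_max lexx.
by rewrite le_max h orbT.
Qed.

Definition PL (L : R) S T := L%:P * S + T.
Definition NW S T := T^`() * S - T * S^`().

Lemma PL_horner L S T r : (PL L S T).[r] = L * S.[r] + T.[r].
Proof. by rewrite /PL !hornerE. Qed.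

Lemma NW_PL L S T : NW S T = (PL L S T)^`() * S - PL L S T * S^`().
Proof. rewrite /NW /PL !derivE; ring. Qed.

Lemma crit_bound S T : (exists u, S.[u] != 0) ->
  exists B, forall L, B < L -> forall c, root (NW S T) c -> 0 < S.[c] ->
    0 < (PL L S T).[c].
Proof.
move=> [u Su].
have [N0|N0] := eqVneq (NW S T) 0.
  have hW : T^`() * S = T * S^`() by apply/eqP; rewrite -subr_eq0 -/(NW S T) N0.
  have Te := wronsk0 _ _ _ Su hW.
  exists (- (T.[u] / S.[u])) => L hL c _ Sc.
  rewrite PL_horner Te hornerM hornerC.
  have : 0 < (L + T.[u] / S.[u]) * S.[c] by apply: mulr_gt0 => //; lra.
  lra.
have [B hB] := list_bound (rootsR (NW S T)) (fun c => - T.[c] / S.[c]).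
exists B => L hL c rc Sc.
have cin : c \in rootsR (NW S T).
  have H := roots_onP (roots_on_rootsR N0).
  by have := H c; rewrite in_itv /= rc => /(_ isT) <-.
have := hB c cin; rewrite /= ler_pdivrMr // => h.
rewrite PL_horner.
have : B * S.[c] < L * S.[c] by rewrite ltr_pM2r.
lra.
Qed.


Lemma neg_between (P : {poly R}) a r : a < r -> P.[r] < 0 ->
  {in `]a, r[, forall z, ~~ root P z} -> forall s, a < s -> s < r -> P.[s] < 0.
Proof.
move=> ar Pr hno s a_s sr; rewrite ltNge; apply/negP => hs.
have [z zin rz] := polyrcf.poly_ivt (ltW sr) (mulr_ge0_le0 hs (ltW Pr)).
have zr : z != r by apply: contraTneq rz => ->; rewrite rootE lt_eqF.
have : z \in `]a, r[.
  rewrite in_itv /=; apply/andP; split; first by apply: (lt_le_trans a_s); rewrite (itvP zin).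
  by rewrite lt_neqAle zr (itvP zin).
by move/hno; rewrite rz.
Qed.

Lemma left_root (P : {poly R}) l r : l < r -> 0 < P.[l] -> P.[r] < 0 ->
  exists a, [/\ l < a, a < r, P.[a] = 0 &
    forall s, a < s -> s < r -> P.[s] < 0].
Proof.
move=> lr Pl Pr.
have P0 : P != 0 by apply: contraTneq Pr => ->; rewrite horner0 ltxx.
have := prev_rootP P l r; case => [P0'|y _ Py yin hno|c _ ce hno].
- by rewrite P0' eqxx in P0.
- have ly : l < y by rewrite (itvP yin).
  have yr : y < r by rewrite (itvP yin).
  exists y; split => //.
  exact: (@neg_between P y r).
- have [z zin rz] := polyrcf.poly_ivt (ltW lr) (mulr_ge0_le0 (ltW Pl) (ltW Pr)).
  have zl : z != l by apply: contraTneq rz => ->; rewrite rootE gt_eqF.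
  have zr : z != r by apply: contraTneq rz => ->; rewrite rootE lt_eqF.
  have : z \in `]l, r[.
    by rewrite in_itv /= !lt_neqAle eq_sym zl zr !(itvP zin).
  by move/hno; rewrite rz.
Qed.

Lemma right_root (P : {poly R}) r h : r < h -> P.[r] < 0 -> 0 < P.[h] ->
  exists b, [/\ r < b, b < h, P.[b] = 0 &
    forall s, r < s -> s < b -> P.[s] < 0].
Proof.
move=> rh Pr Ph.
pose Q := P \Po (- 'X).
have QE t : Q.[t] = P.[- t] by rewrite /Q horner_comp !hornerE.
have h1 : - h < - r by rewrite ltrN2.
have h2 : 0 < Q.[- h] by rewrite QE opprK.
have h3 : Q.[- r] < 0 by rewrite QE opprK.
have [a [ha1 ha2 ha3 ha4]] := @left_root Q (- h) (- r) h1 h2 h3.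
exists (- a); split.
- by rewrite ltrNr.
- by rewrite ltrNl.
- by rewrite -QE.
move=> s rs sa; rewrite -[s]opprK -QE; apply: ha4.
  by rewrite ltrNr.
by rewrite ltrN2.
Qed.


Lemma noneg S T L : (forall r, 0 <= S.[r]) -> (forall r, S.[r] = 0 -> 0 < T.[r]) ->
  (forall c, root (NW S T) c -> 0 < S.[c] -> 0 < (PL L S T).[c]) ->
  0 < lead_coef (PL L S T) -> ~~ odd (size (PL L S T)).-1 ->
  forall r, 0 <= (PL L S T).[r].
Proof.
move=> hS0 hST hcrit hlc hev r0; rewrite leNgt; apply/negP => hr0.
have NWe := NW_PL L S T.
set P := PL L S T in hcrit hlc hev hr0 NWe *.
have P0 : P != 0 by rewrite -lead_coef_eq0 gt_eqF.
pose M := Num.max (cauchy_bound P) (`|r0| + 1).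
have PM : 0 < P.[M].
  have := @sgp_pinftyP _ _ P (ge_cauchy_bound P0) M.
  rewrite in_itv /= andbT le_max lexx /= => /(_ isT).
  by move=> h; rewrite -sgr_gt0 h /sgp_pinfty sgr_gt0.
have PmM : 0 < P.[- M].
  have := @sgp_minftyP _ _ P (le_cauchy_bound P0) (- M).
  rewrite in_itv /= lerN2 le_max lexx /= => /(_ isT).
  move=> h; rewrite -sgr_gt0 h /sgp_minfty -signr_odd (negPf hev) expr0 mul1r.
  by rewrite sgr_gt0.
have h1 := ler_norm r0.
have h2 : - r0 <= `|r0| by rewrite -normrN ler_norm.
have h3 : `|r0| + 1 <= M by rewrite le_max lexx orbT.
have [a [ha1 ha2 ha3 ha4]] := @left_root P (- M) r0 ltac:(lra) PmM hr0.
have [b [hb1 hb2 hb3 hb4]] := @right_root P r0 M ltac:(lra) hr0 PM.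
have Ple : forall t, a <= t -> t <= b -> P.[t] <= 0.
  move=> t hat htb; have [tr|rt] := ltrP t r0.
    move: hat; rewrite le_eqVlt => /orP[/eqP<-|a_t]; first by rewrite ha3.
    exact/ltW/ha4.
  move: rt; rewrite le_eqVlt => /orP[/eqP<-|rt]; first exact: ltW.
  move: htb; rewrite le_eqVlt => /orP[/eqP->|tb]; first by rewrite hb3.
  exact/ltW/hb4.
have Spos : forall t, a <= t -> t <= b -> 0 < S.[t].
  move=> t hat htb; rewrite lt_def hS0 andbT; apply/eqP => St0.
  have := hST t St0; have := Ple t hat htb; rewrite /P PL_horner St0 mulr0 add0r.
  lra.
have Na : (NW S T).[a] = P^`().[a] * S.[a].
  by rewrite NWe hornerD hornerN !hornerM ha3 mul0r subr0.
have Nb : (NW S T).[b] = P^`().[b] * S.[b].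
  by rewrite NWe hornerD hornerN !hornerM hb3 mul0r subr0.
have da := @deriv_right P a r0 ha2 ha3 ha4.
have db := @deriv_left P b r0 hb1 hb3 hb4.
have Sa := Spos a (lexx a) ltac:(lra).
have Sb := Spos b ltac:(lra) (lexx b).
have hab : a <= b by lra.
have hN : (NW S T).[a] * (NW S T).[b] <= 0.
  rewrite Na Nb mulrACA; apply: mulr_le0_ge0; first exact: mulr_le0_ge0.
  by apply: mulr_ge0; apply: ltW.
have [c cin rc] := polyrcf.poly_ivt hab hN.
have ac : a <= c by rewrite (itvP cin).
have cb : c <= b by rewrite (itvP cin).
have := hcrit c rc (Spos c ac cb); have := Ple c ac cb; lra.
Qed.


Lemma szL S T L : S != 0 -> (size T <= size S)%N -> 0 < L ->
  0 < L * lead_coef S + T`_(size S).-1 ->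
  size (PL L S T) = size S /\ lead_coef (PL L S T) = L * lead_coef S + T`_(size S).-1.
Proof.
move=> S0 hsz L0 hc.
have hle : (size (PL L S T) <= size S)%N.
  apply: leq_trans (size_polyD _ _) _.
  by rewrite size_Cmul ?gt_eqF // geq_max leqnn hsz.
have hco : (PL L S T)`_(size S).-1 = L * lead_coef S + T`_(size S).-1.
  by rewrite /PL coefD coefCM lead_coefE.
have hgt : ((size S).-1 < size (PL L S T))%N.
  rewrite ltnNge; apply/negP => h.
  by move: hc; rewrite -hco nth_default // ltxx.
have e : size (PL L S T) = size S.
  apply/eqP; rewrite eqn_leq hle /=.
  by rewrite (polySpred S0).
by split => //; rewrite lead_coefE e hco.
Qed.

Lemma core S T : (forall r, 0 <= S.[r]) -> (forall r, S.[r] = 0 -> 0 < T.[r]) ->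
  (size T <= size S)%N -> 0 < lead_coef S -> ~~ odd (size S).-1 ->
  exists L, [/\ 0 < L, forall r, 0 < (PL L S T).[r] & size (PL L S T) = size S].
Proof.
move=> hS0 hST hsz hlc hev.
have S0 : S != 0 by rewrite -lead_coef_eq0 gt_eqF.
have Su : S.[cauchy_bound S] != 0.
  have := @ge_cauchy_bound _ S S0 (cauchy_bound S).
  by rewrite in_itv /= lexx /= => /(_ isT); rewrite rootE.
have [B hB] := @crit_bound S T (ex_intro (fun u => S.[u] != 0) _ Su).
set t := T`_(size S).-1.
set lc := lead_coef S.
pose L0 := `|B| + `|t| / lc + 1.
have ht : `|t| / lc * lc = `|t| by rewrite divfK // gt_eqF.
have hB1 : B <= `|B| := ler_norm B.
have ht1 : - t <= `|t| by rewrite -normrN ler_norm.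
have hdiv : 0 <= `|t| / lc by rewrite divr_ge0 // ltW.
have hBa : 0 <= `|B| by [].
have L0pos : 0 < L0 by rewrite /L0; lra.
have L0B : B < L0 by rewrite /L0; lra.
have L0c : 0 < L0 * lc + t.
  have : L0 * lc = `|B| * lc + `|t| + lc by rewrite /L0 !mulrDl ht mul1r.
  have : 0 <= `|B| * lc by rewrite mulr_ge0 // ltW.
  move=> h1 ->; have h4 : 0 < lc := hlc; clear -h1 h4 ht1; lra.
have [sz0 lc0] := @szL S T L0 S0 hsz L0pos L0c.
have hnn := @noneg S T L0 hS0 hST (hB L0 L0B) ltac:(rewrite lc0 //)
  ltac:(rewrite sz0 //).
have L1c : 0 < (L0 + 1) * lc + t.
  by rewrite mulrDl mul1r; move: L0c hlc; rewrite -/lc; lra.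
have [sz1 _] := @szL S T (L0 + 1) S0 hsz ltac:(lra) L1c.
exists (L0 + 1); split => //; first lra.
move=> r; rewrite PL_horner.
have := hnn r; rewrite PL_horner.
have [Sr0|Sr0] := eqVneq S.[r] 0.
  by rewrite Sr0 !mulr0 !add0r => _; apply: hST.
have : 0 < S.[r] by rewrite lt_def Sr0 hS0.
move=> h1 h2; rewrite mulrDl mul1r; lra.
Qed.


Lemma partA_pos (x y : {poly R}) : x != 0 -> y != 0 -> (size y <= size x)%N ->
  (forall u, root x u -> 0 < y.[u]) ->
  exists beta : {poly R},
       Gamma beta /\ GammaPos (x ^+ 2 + y * beta) /\
       (deg x - 1 <= deg beta)%N /\ (deg beta <= deg x)%N /\
       (deg (x ^+ 2 + y * beta) = 2 * deg x)%N.
Proof.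
move=> x0 y0 hsz hroot.
set n := (size x).-1.
set k := n./2.
pose b : {poly R} := ('X^2 + 1%:P) ^+ k.
have bpos r : 0 < b.[r].
  rewrite /b horner_exp !hornerE exprn_gt0 //.
  have := sqr_ge0 r; rewrite expr2; lra.
have b0 : b != 0 by apply: contraTneq (bpos 0) => ->; rewrite horner0 ltxx.
have sb : size b = ((k * 2).+1)%N.
  rewrite (polySpred b0) /b size_exp size_XnaddC //.
  by rewrite mulnC.
have sS : size (x ^+ 2) = ((n * 2).+1)%N.
  by rewrite (polySpred (expf_neq0 2 x0)) size_exp.
have hk : (odd n + k.*2 = n)%N := odd_double_half n.
have hk2 : (k * 2 <= n)%N by move: hk; rewrite -muln2; case: (odd n) => /=; lia.
have hk3 : (n - 1 <= k * 2)%N by move: hk; rewrite -muln2; case: (odd n) => /=; lia.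
have sx : size x = n.+1%N by rewrite (polySpred x0).
clearbody k n.
have sT : (size (y * b)%R <= size (x ^+ 2)%R)%N.
  rewrite (poly.size_mul y0 b0) sS sb addnS /=; move: hsz; rewrite sx => hsz.
  apply: leq_trans (leq_add hsz hk2) _; lia.
have hS0 r : 0 <= (x ^+ 2).[r] by rewrite horner_exp sqr_ge0.
have hST r : (x ^+ 2).[r] = 0 -> 0 < (y * b).[r].
  rewrite horner_exp => /eqP; rewrite expf_eq0 /= => /eqP xr.
  by rewrite hornerM mulr_gt0 // hroot // rootE xr.
have hlc : 0 < lead_coef (x ^+ 2).
  by rewrite lead_coef_exp exprn_even_gt0 // lead_coef_eq0.
have hev : ~~ odd (size (x ^+ 2)).-1 by rewrite sS /= oddM andbF.
have [L [L0 Lpos Lsz]] := @core (x ^+ 2) (y * b) hS0 hST sT hlc hev.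
exists (L^-1%:P * b).
have Li : L^-1 != 0 by rewrite invr_eq0 gt_eqF.
have e : x ^+ 2 + y * (L^-1%:P * b) = L^-1%:P * PL L (x ^+ 2) (y * b).
  have hc : L^-1%:P * L%:P = 1 :> {poly R} by rewrite -polyCM mulVf ?gt_eqF // polyC1.
  by rewrite /PL mulrDr [L^-1%:P * (L%:P * _)]mulrA hc mul1r mulrCA.
split.
  move=> r; rewrite rootE hornerCM mulf_eq0 negb_or Li /=.
  by rewrite gt_eqF.
split.
  move=> r; rewrite e hornerCM mulr_gt0 // invr_gt0 //.
rewrite /deg size_Cmul // sb e size_Cmul // Lsz sS sx /=.
split; first by move: hk3; lia.
split; first by lia.
by lia.
Qed.

End S.

Lemma partA (R : rcfType) (x y : {poly R}) : x != 0 -> y != 0 -> deg x = deg y ->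
  ((forall u : R, root x u -> 0 < y.[u]) \/ (forall u : R, root x u -> y.[u] < 0)) ->
     exists beta : {poly R},
       Gamma beta /\ GammaPos (x ^+ 2 + y * beta) /\
       (deg x - 1 <= deg beta)%N /\ (deg beta <= deg x)%N /\
       (deg (x ^+ 2 + y * beta) = 2 * deg x)%N.
Proof.
move=> x0 y0 hd.
have hsz : (size y <= size x)%N.
  by rewrite (polySpred x0) (polySpred y0); move: hd; rewrite /deg => ->.
case => [hp|hn].
  exact: partA_pos.
have [beta [h1 [h2 [h3 [h4 h5]]]]] := @partA_pos R x (- y) x0
  ltac:(rewrite oppr_eq0 //) ltac:(rewrite size_polyN //)
  ltac:(move=> u /hn; rewrite hornerN oppr_gt0 //).
exists (- beta); split.
  by move=> r; rewrite rootN; apply: h1.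
have e : x ^+ 2 + y * - beta = x ^+ 2 + - y * beta by rewrite mulrN mulNr.
rewrite e /deg size_polyN.
by split.
Qed.

Theorem lemma3p2 (R : rcfType) (x y : {poly R}) :
  x != 0 -> y != 0 -> deg x = deg y ->
  (((forall u : R, root x u -> 0 < y.[u]) \/ (forall u : R, root x u -> y.[u] < 0)) ->
     exists beta : {poly R},
       Gamma beta /\ GammaPos (x ^+ 2 + y * beta) /\
       (deg x - 1 <= deg beta)%N /\ (deg beta <= deg x)%N /\
       (deg (x ^+ 2 + y * beta) = 2 * deg x)%N) /\
  (((forall z : R, root y z -> 0 < x.[z]) \/ (forall z : R, root y z -> x.[z] < 0)) ->
     exists eta : {poly R},
       Gamma eta /\ GammaPos (x * eta + y ^+ 2) /\
       (deg y - 1 <= deg eta)%N /\ (deg eta <= deg y)%N /\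
       (deg (x * eta + y ^+ 2) = 2 * deg y)%N).
Proof.
move=> x0 y0 hd; split; first exact: partA.
move=> h.
have [eta H] := @partA R y x y0 x0 (esym hd) h.
by exists eta; rewrite addrC.
Qed.
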